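(* Let $c\colon G\to G_0$ be a collapse of finite connected graphs. Then $F_G\circ c^*=F_{G_0}$ on $\mathcal M(G_0)$, i.e. $F_G(c^*(\ell))=F_{G_0}(\ell)$ for all $\ell\in\mathcal M(G_0)$.
   Context: A graph has oriented edge set $E$ with maps $o,\tau$ to the vertex set, a fixed-point-free involution $e\mapsto\bar e$ with $o(\bar e)=\tau(e)$, and orientation $E_+$. $\mathcal M(G)=\mathbb R_{>0}^{|E_+|}$ is the set of length functions, extended to $E$ by $\ell(\bar e)=\ell(e)$. For any $f\in\mathbb R^{|E_+|}$ (extended symmetrically), $A_{G,f}(e,e')=A_G(e,e')\exp(-f(e))$ where $A_G(e,e')=1$ if $\tau(e)=o(e')$ and $e'\ne\bar e$ and $0$ otherwise, and $F_G(f)=\det(I-A_{G,f})$, which is defined on all of $\mathbb R^{|E_+|}$. A collapse $c\colon G\to G_0$ is a surjection such that each edge of $G$ maps to a vertex or to an edge of $G_0$ and $c^{-1}(x)$ is a contractible subgraph for every point $x$ of $G_0$. The map $c^*\colon\mathcal M(G_0)\to\mathbb R_{\ge0}^{|E_+|}$ is $c^*(\ell)(e)=\ell(c(e))$ if $c(e)$ is an edge and $c^*(\ell)(e)=0$ otherwise. *)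

(* Defs.v *)
From HB Require Import structures.
From mathcomp Require Import all_boot all_order all_algebra.
From mathcomp Require Import reals sequences exp.

Set Implicit Arguments.
Unset Strict Implicit.
Unset Printing Implicit Defensive.

Import Order.TTheory GRing.Theory Num.Theory.
Local Open Scope ring_scope.

(* A finite graph in Serre's sense: vertex set, oriented edge set, origin and
   terminus maps, and a fixed-point-free involution e |-> bar e with
   o(bar e) = tau(e) (hence also tau(bar e) = o(e)). Loops and multiple
   edges are allowed. *)
Record graph := Graph {
  gV : finType;
  gE : finType;
  org : gE -> gV;
  ter : gE -> gV;
  rev : gE -> gE;
  revK : forall e, rev (rev e) = e;
  rev_neq : forall e, rev e != e;
  org_rev : forall e, org (rev e) = ter e
}.

Definition adj (G : graph) : rel (gV G) :=
  fun x y => [exists e : gE G, (org e == x) && (ter e == y)].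

Definition connected_graph (G : graph) : Prop :=
  (0 < #|gV G|)%N /\ forall x y : gV G, connect (@adj G) x y.

(* A function on oriented edges extended symmetrically: f (bar e) = f e.
   Functions on E_+ correspond bijectively to such symmetric functions. *)
Definition symmetric_fun (G : graph) (R : Type) (f : gE G -> R) : Prop :=
  forall e, f (rev e) = f e.

Definition length_fun (R : realType) (G : graph) (l : gE G -> R) : Prop :=
  symmetric_fun l /\ forall e, 0 < l e.

Definition AG (G : graph) (e e' : gE G) : bool :=
  (ter e == org e') && (e' != rev e).

Definition AGf (R : realType) (G : graph) (f : gE G -> R) : 'M[R]_#|gE G| :=
  \matrix_(i, j) ((AG (enum_val i) (enum_val j))%:R * expR (- f (enum_val i))).

Definition FG (R : realType) (G : graph) (f : gE G -> R) : R :=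
  \det (1%:M - AGf f).

(* Combinatorial collapse c : G -> G0, given by a vertex map cV and an edge
   map cE, where cE e = None means that the edge e is mapped to a vertex and
   cE e = Some e0 means that e is mapped onto the edge e0. *)
Definition is_collapse (G G0 : graph) (cV : gV G -> gV G0)
    (cE : gE G -> option (gE G0)) : Prop :=
  (forall e e0, cE e = Some e0 ->
     [/\ cV (org e) = org e0, cV (ter e) = ter e0 & cE (rev e) = Some (rev e0)])
  /\ (forall e, cE e = None -> cV (org e) = cV (ter e) /\ cE (rev e) = None)
  (* the preimage of an interior point of an edge e0 is a single point,
     i.e. exactly one oriented edge is mapped onto e0 *)
  /\ (forall e0 : gE G0, #|[set e | cE e == Some e0]| = 1%N)
  (* the preimage of a vertex v0 is a contractible subgraph, i.e. a tree:
     nonempty, connected, with Euler characteristic 1 *)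
  /\ (forall v0 : gV G0,
       let Vs := [set v | cV v == v0] in
       let Es := [set e | (cE e == None) && (cV (org e) == v0)] in
       [/\ (0 < #|Vs|)%N,
           (forall x y, x \in Vs -> y \in Vs ->
              connect (fun a b => [exists e, [&& cE e == None, org e == a
                                                  & ter e == b]]) x y)
         & #|Es| = (2 * (#|Vs| - 1))%N]).

Definition pullback (R : realType) (G G0 : graph)
    (cE : gE G -> option (gE G0)) (l : gE G0 -> R) : gE G -> R :=
  fun e => if cE e is Some e0 then l e0 else 0.

(* Main.v *)
Require Import Defs.
From mathcomp Require Import all_boot all_order all_algebra.
From mathcomp Require Import reals sequences exp.
From mathcomp Require Import all_fingroup zify.
Local Notation rev := Defs.rev.
Local Notation revK := Defs.revK.

Set Implicit Arguments.
Unset Strict Implicit.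
Unset Printing Implicit Defensive.

Section GenS.
Import GRing.Theory.
Local Open Scope ring_scope.

Lemma sylv (R : comPzRingType) (m k : nat) (Y : 'M[R]_(m,k)) (Q : 'M[R]_(k,m)) :
  \det (1%:M - Y *m Q) = \det (1%:M - Q *m Y).
Proof.
have h1 : block_mx 1%:M Y Q 1%:M =
    block_mx 1%:M 0 Q 1%:M *m block_mx 1%:M Y 0 (1%:M - Q *m Y).
  rewrite mulmx_block; congr block_mx; rewrite ?mul1mx ?mul0mx ?mulmx0 ?mulmx1 ?addr0 ?add0r //.
  by rewrite addrC subrK.
have h2 : block_mx 1%:M Y Q 1%:M =
    block_mx 1%:M Y 0 1%:M *m block_mx (1%:M - Y *m Q) 0 Q 1%:M.
  rewrite mulmx_block; congr block_mx; rewrite ?mul1mx ?mul0mx ?mulmx0 ?mulmx1 ?addr0 ?add0r //.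
  by rewrite subrK.
have := congr1 determinant h1; rewrite h2 !det_mulmx !det_lblock !det_ublock !det1.
by rewrite !mul1r !mulr1; apply.
Qed.

Lemma sum_bool1 (R : pzSemiRingType) (T : finType) (F : pred T) :
  (forall i j, F i -> F j -> i = j) -> \sum_(i : T) (F i)%:R = ([exists i, F i])%:R :> R.
Proof.
move=> hu; case: (boolP [exists i, F i]) => [/existsP [i Fi] | /existsPn nF].
- rewrite (bigD1 i) //= Fi big1 ?addr0 // => j hj.
  by case hFj: (F j) => //; rewrite (hu _ _ hFj Fi) eqxx in hj.
- by rewrite big1 // => i _; rewrite (negbTE (nF i)).
Qed.

Lemma det_pot (R : comPzRingType) n (B : 'M[R]_n) (phi : 'I_n -> nat) :
  (forall i j, B i j != 0 -> (phi j < phi i)%N) -> \det (1%:M - B) = 1.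
Proof.
move=> hB.
have hBii i : B i i = 0 by apply/eqP/negP => /negP /hB; rewrite ltnn.
rewrite /determinant (bigD1 1%g) //= [X in _ + X]big1 => [|s hs].
  rewrite odd_perm1 expr0 mul1r addr0 big1 // => i _.
  by rewrite perm1 !mxE eqxx hBii subr0.
case: (pickP (fun i => (1%:M - B) i (s i) == 0)) => [i /eqP hi | hall].
  by rewrite (bigD1 i) //= hi mul0r mulr0.
exfalso.
have [i0 hi0] : exists i0, s i0 != i0.
  case: (pickP (fun i => s i != i)) => [i0 h|hn]; first by exists i0.
  move: hs; suff -> : s = 1%g by rewrite eqxx.
  by apply/permP => i; rewrite perm1; apply/eqP; move: (hn i) => /negbFE.
case: (@arg_minnP _ i0 (fun i => s i != i) phi hi0) => i hi hmin.
have hsi : s (s i) != s i by apply: contra hi => /eqP /perm_inj ->.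
have := hmin _ hsi; have := hall i; rewrite !mxE [i == s i]eq_sym (negbTE hi) sub0r oppr_eq0 => /negbT /hB.
lia.
Qed.

End GenS.

Section Comb.
Variables (G G0 : graph) (cV : gV G -> gV G0) (cE : gE G -> option (gE G0)).
Hypothesis Hc : is_collapse cV cE.

Lemma ter_rev (H : graph) (e : gE H) : ter (rev e) = org e.
Proof. by rewrite -{2}(revK e) org_rev. Qed.

Lemma rev_inj (H : graph) : injective (@rev H).
Proof. exact: (can_inj (@revK H)). Qed.

Lemma cE_some e e0 : cE e = Some e0 ->
  [/\ cV (org e) = org e0, cV (ter e) = ter e0 & cE (rev e) = Some (rev e0)].
Proof. by case: Hc => H1 _ /H1. Qed.

Lemma cE_none e : cE e = None -> cV (org e) = cV (ter e) /\ cE (rev e) = None.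
Proof. by case: Hc => _ [H2 _] /H2. Qed.

Lemma cE_none_rev e : cE (rev e) = None -> cE e = None.
Proof. by move/cE_none=> [_]; rewrite revK. Qed.

Lemma lift_uniq a b e0 : cE a = Some e0 -> cE b = Some e0 -> a = b.
Proof.
case: Hc => _ [_ [H3 _]] ha hb.
have /cards1P [x Hx] : #|[set e | cE e == Some e0]| == 1 by rewrite H3.
have : a \in [set e | cE e == Some e0] by rewrite inE ha.
have : b \in [set e | cE e == Some e0] by rewrite inE hb.
by rewrite Hx !inE => /eqP -> /eqP ->.
Qed.

Lemma lift_ex e0 : exists a, cE a = Some e0.
Proof.
case: Hc => _ [_ [H3 _]].
have /cards1P [x Hx] : #|[set e | cE e == Some e0]| == 1 by rewrite H3.
have : x \in [set e | cE e == Some e0] by rewrite Hx inE.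
by rewrite inE => /eqP; exists x.
Qed.

Definition crel : rel (gV G) := fun a b =>
  [exists e, [&& cE e == None, org e == a & ter e == b]].

Lemma fib_conn x y : cV x = cV y -> connect crel x y.
Proof.
case: Hc => _ [_ [_ H4]] hxy.
case: (H4 (cV x)) => _ /(_ x y) H _; apply: H; by rewrite inE ?hxy.
Qed.

Lemma crel_cV a b : crel a b -> cV a = cV b.
Proof. by move=> /existsP [e /and3P [/eqP /cE_none [h _] /eqP <- /eqP <-]]. Qed.

Definition root (x : gV G) : gV G := odflt x [pick y | cV y == cV x].

Lemma root_cV x : cV (root x) = cV x.
Proof. by rewrite /root; case: pickP => [y /eqP|] //. Qed.

Lemma root_eq x y : cV x = cV y -> root x = root y.
Proof.
move=> h; rewrite /root h; case: pickP => [z _ //|/(_ x)].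
by rewrite h eqxx.
Qed.

Definition dpath x n := [exists t : n.-tuple (gV G), path crel x t && (last x t == root x)].

Lemma dpath_ex x : exists n, dpath x n.
Proof.
have /connectP [p Hp Hl] := fib_conn (esym (root_cV x)).
exists (size p); apply/existsP; exists (in_tuple p); by rewrite Hp /= -Hl eqxx.
Qed.

Definition depth x := ex_minn (dpath_ex x).

Lemma depthP x : dpath x (depth x).
Proof. by rewrite /depth; case: ex_minnP. Qed.

Lemma depth_min x n : dpath x n -> depth x <= n.
Proof. by rewrite /depth; case: ex_minnP => m _ H /H. Qed.

Lemma path_cV x p : path crel x p -> cV (last x p) = cV x.
Proof.
elim: p x => //= y p IH x /andP [/crel_cV h /IH ->]; by rewrite h.
Qed.

Lemma dpath0 x : dpath x 0 -> x = root x.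
Proof. by move=> /existsP [t /andP [_ /eqP]]; rewrite tuple0. Qed.

Lemma depth0 x : depth x = 0 -> x = root x.
Proof. move=> h; have := depthP x; rewrite h; exact: dpath0. Qed.

Lemma depth_root x : depth (root x) = 0.
Proof.
apply/eqP; rewrite -leqn0; apply: depth_min; apply/existsP; exists [tuple].
by rewrite /= (root_eq (root_cV x)) (root_eq (esym (root_cV x))) eqxx.
Qed.

Lemma dpath_cons a b n : crel a b -> dpath b n -> dpath a n.+1.
Proof.
move=> hab /existsP [t /andP [hp /eqP hl]]; apply/existsP; exists [tuple of b :: t].
by rewrite /= hab hp /= hl (root_eq (crel_cV hab)) eqxx.
Qed.

Lemma depth_step a b : crel a b -> depth a <= (depth b).+1.
Proof. move=> h; apply: depth_min; apply: dpath_cons h (depthP b). Qed.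

Lemma dpath_uncons x n : dpath x n -> 0 < n -> exists y, crel x y /\ dpath y n.-1.
Proof.
move=> /existsP [[[|y s] Hs] /andP [hp /eqP hl]] //=; first by rewrite -(eqP Hs).
move=> _; move: hp hl => /= /andP [hxy hp] hl; exists y; split => //.
have Hs' : size s == n.-1 by rewrite -(eqP Hs).
apply/existsP; exists (Tuple Hs'); by rewrite /= hp hl (root_eq (crel_cV hxy)) eqxx.
Qed.

Lemma depth_down x : 0 < depth x ->
  exists e, [&& cE e == None, org e == x & depth (ter e) == (depth x).-1].
Proof.
move=> h; have [y [hxy hy]] := dpath_uncons (depthP x) h.
have h1 := depth_min hy; have h2 := depth_step hxy.
move: hxy => /existsP [e /and3P [h3 h4 /eqP h5]]; exists e; rewrite h3 h4 h5 /=.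
apply/eqP; lia.
Qed.

Definition pe x : option (gE G) :=
  if depth x is 0 then None
  else [pick e | [&& cE e == None, org e == x & depth (ter e) == (depth x).-1]].

Definition parent x := if pe x is Some e then ter e else x.

Lemma pe_spec x e : pe x = Some e ->
  [/\ 0 < depth x, cE e = None, org e = x, ter e = parent x & depth (ter e) = (depth x).-1].
Proof.
rewrite /parent; move=> h; rewrite h; move: h; rewrite /pe.
case hd: (depth x) => [|d] //; case: pickP => // e' /and3P [/eqP h1 /eqP h2 /eqP h3] [<-].
by split.
Qed.

Lemma pe_ex x : 0 < depth x -> exists e, pe x = Some e.
Proof.
move=> h; have [e he] := depth_down h; rewrite /pe.
case hd: (depth x) h => [|d] // _; case: pickP => [e' _|/(_ e)]; first by exists e'.
by rewrite hd in he; rewrite he.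
Qed.

Lemma pe_none x : depth x = 0 -> pe x = None.
Proof. by rewrite /pe => ->. Qed.

Lemma depth_parent x : depth (parent x) = (depth x).-1.
Proof.
case h: (pe x) => [e|]; first by have [_ _ _ <- ->] := pe_spec h.
rewrite /parent h; case hd: (depth x) => [|d] //.
have hx : 0 < depth x by rewrite hd.
by have [e he] := pe_ex hx; rewrite he in h.
Qed.

Lemma cV_parent x : cV (parent x) = cV x.
Proof.
rewrite /parent; case h: (pe x) => [e|] //; have [_ /cE_none [hv _] <- _ _] := pe_spec h.
by rewrite hv.
Qed.

Definition downE e := pe (org e) == Some e.
Definition upE e := pe (ter e) == Some (rev e).

Lemma downE_spec e : downE e ->
  [/\ cE e = None, 0 < depth (org e), ter e = parent (org e) & depth (ter e) = (depth (org e)).-1].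
Proof. by move=> /eqP /pe_spec [h1 h2 _ h4 h5]. Qed.

Lemma upE_spec e : upE e ->
  [/\ cE e = None, 0 < depth (ter e), org e = parent (ter e) & depth (org e) = (depth (ter e)).-1].
Proof.
by move=> /eqP /pe_spec [h1 /cE_none_rev h2 _]; rewrite ter_rev.
Qed.

Lemma down_up_excl e : downE e -> upE e -> False.
Proof. move=> /downE_spec [_ h1 _ h2] /upE_spec [_ h3 _ h4]; lia. Qed.

Lemma up_rev x e : pe x = Some e -> upE (rev e).
Proof.
by move=> h; have [_ _ h2 _ _] := pe_spec h; rewrite /upE ter_rev h2 h revK.
Qed.

Lemma down_pe x e : pe x = Some e -> downE e.
Proof. by move=> h; have [_ _ h2 _ _] := pe_spec h; rewrite /downE h2 h. Qed.


Lemma classify e : cE e = None -> downE e || upE e.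
Proof.
move=> he.
case: Hc => _ [_ [_ H4]].
set v0 := cV (org e).
have [Hne Hcon Hcard] := H4 v0.
set Vs := [set v | cV v == v0] in Hne Hcon Hcard.
set Es := [set e | (cE e == None) && (cV (org e) == v0)] in Hcard.
set NR := [set v in Vs | 0 < depth v].
set D := [set f in Es | downE f].
set U := [set f in Es | upE f].
have [z hz] : exists z, z \in Vs by apply/card_gt0P.
set r0 := root z.
have r0V : r0 \in Vs by rewrite inE root_cV; rewrite inE in hz.
have hNR : NR = Vs :\ r0.
  apply/setP => v; rewrite !inE; case hv: (cV v == v0); rewrite ?andbF ?andbT //.
  apply/idP/idP => [h|/eqP h].
  - apply/eqP => hvr; have := depth_root z; rewrite -/r0 -hvr; lia.
  - rewrite lt0n; apply/eqP => /depth0 hd; apply: h.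
    rewrite hd /r0; apply: root_eq; rewrite inE in hz; by rewrite (eqP hv) (eqP hz).
have cNR : #|Vs| = (#|NR|).+1 by rewrite hNR (cardsD1 r0 Vs) r0V.
have cD : #|D| = #|NR|.
  have <- : [set org f | f in D] = NR.
    apply/setP => v; apply/imsetP/idP.
    - move=> [f]; rewrite !inE => /andP [/andP [_ hf] hd] ->.
      by rewrite hf; have [_ -> _ _] := downE_spec hd.
    - rewrite !inE => /andP [hv hd]; have [f hf] := pe_ex hd.
      have [_ h2 h3 _ _] := pe_spec hf; exists f => //.
      by rewrite !inE h2 h3 hv (down_pe hf).
  apply/esym/card_in_imset => f1 f2; rewrite !inE => /andP [_ /eqP h1] /andP [_ /eqP h2] h.
  by move: h1 h2; rewrite h => -> [].
have cU : #|U| = #|NR|.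
  have <- : [set ter f | f in U] = NR.
    apply/setP => v; apply/imsetP/idP.
    - move=> [f]; rewrite !inE => /andP [/andP [h0 hf] hu] ->.
      have [h1 -> _ _] := upE_spec hu; rewrite andbT.
      by have [<- _] := cE_none h1.
    - rewrite !inE => /andP [hv hd]; have [f hf] := pe_ex hd.
      have [_ h2 h3 h4 _] := pe_spec hf; exists (rev f); last by rewrite ter_rev.
      rewrite !inE (up_rev hf) org_rev h4 cV_parent hv andbT.
      by have [_ ->] := cE_none h2.
  apply/esym/card_in_imset => f1 f2; rewrite !inE => /andP [_ /eqP h1] /andP [_ /eqP h2] h.
  by move: h1 h2; rewrite h => -> [] /rev_inj.
have dDU : D :&: U = set0.
  apply/setP => f; rewrite !inE; apply/negP => /andP [/andP [_ h1] /andP [_ h2]].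
  exact: down_up_excl h1 h2.
have sDU : D :|: U \subset Es.
  by apply/subsetP => f; rewrite !inE => /orP [] /andP [].
have : D :|: U == Es.
  by rewrite eqEcard sDU /= cardsU dDU cards0 subn0 cD cU Hcard cNR; lia.
move=> /eqP hE; have : e \in Es.
  by rewrite inE he /v0 !eqxx.
by rewrite -hE !inE => /orP [] /andP [_ ->] //; rewrite orbT.
Qed.

Definition anc a z := (depth a <= depth z) && (iter (depth z - depth a) parent z == a).

Lemma depth_iter k z : depth (iter k parent z) = depth z - k.
Proof. by elim: k => [|k IH]; rewrite ?subn0 //= depth_parent IH subnS. Qed.

Lemma cV_iter k z : cV (iter k parent z) = cV z.
Proof. by elim: k => [|k IH] //=; rewrite cV_parent. Qed.

Lemma anc_refl z : anc z z.
Proof. by rewrite /anc leqnn subnn eqxx. Qed.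

Lemma anc_depth a z : anc a z -> depth a <= depth z.
Proof. by case/andP. Qed.

Lemma anc_cV a z : anc a z -> cV a = cV z.
Proof. by case/andP => _ /eqP <-; rewrite cV_iter. Qed.

Lemma anc_eqd a z : anc a z -> depth a = depth z -> a = z.
Proof. by case/andP => _ /eqP h hd; rewrite hd subnn in h. Qed.

Lemma anc_chain a b z : anc a z -> anc b z -> depth a = depth b -> a = b.
Proof. by move=> /andP [_ /eqP ha] /andP [_ /eqP hb] hd; rewrite -ha -hb hd. Qed.

Lemma anc_up c z : anc c z -> 0 < depth c -> anc (parent c) z.
Proof.
case/andP => h1 /eqP h2 h3; rewrite /anc depth_parent.
have -> : depth z - (depth c).-1 = (depth z - depth c).+1 by lia.
rewrite iterS h2 eqxx andbT; lia.
Qed.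

Lemma anc_par z : 0 < depth z -> anc (parent z) z.
Proof. exact: anc_up (anc_refl z). Qed.

Lemma anc_inv a z : anc a z -> a = z \/ (0 < depth z /\ anc a (parent z)).
Proof.
move=> h; case: (eqVneq (depth a) (depth z)) => [/(anc_eqd h)|hne]; first by left.
right; move: h; case/andP => h1 /eqP h2.
have hlt : depth a < depth z by rewrite ltn_neqAle hne h1.
split; first lia.
rewrite /anc depth_parent.
have e1 : depth z - depth a = ((depth z).-1 - depth a).+1 by lia.
by rewrite e1 iterSr in h2; rewrite h2 eqxx andbT; lia.
Qed.

Lemma anc_parent_r a z : anc a (parent z) -> 0 < depth z -> anc a z.
Proof.
case/andP => h1 /eqP h2 hz; rewrite depth_parent in h1 h2; rewrite /anc.
have e1 : depth z - depth a = ((depth z).-1 - depth a).+1 by lia.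
by rewrite e1 iterSr h2 eqxx andbT; lia.
Qed.

Lemma anc_child a z : anc a z -> a != z ->
  exists c, [/\ parent c = a, anc c z & depth c = (depth a).+1].
Proof.
move=> h hne; have hlt : depth a < depth z.
  rewrite ltn_neqAle anc_depth // andbT; apply/eqP => /(anc_eqd h) hh.
  by rewrite hh eqxx in hne.
move: h; case/andP => h1 /eqP h2.
exists (iter (depth z - depth a).-1 parent z).
have hd : depth (iter (depth z - depth a).-1 parent z) = (depth a).+1.
  by rewrite depth_iter; lia.
split => //.
- by rewrite -iterS prednK ?subn_gt0.
- rewrite /anc hd; have -> : depth z - (depth a).+1 = (depth z - depth a).-1 by lia.
  by rewrite eqxx andbT.
Qed.

Lemma anc_root z : anc (root z) z.
Proof.
rewrite /anc depth_root subn0 leq0n /=.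
have h : depth (iter (depth z) parent z) = 0 by rewrite depth_iter subnn.
rewrite {1}(depth0 h); apply/eqP/root_eq; by rewrite cV_iter.
Qed.

Definition r : rel (gE G) := fun e e' => (cE e == None) && AG e e'.

Lemma connect_inv (S : pred (gE G)) x y :
  (forall a b, S a -> r a b -> S b) -> S x -> connect r x y -> S y.
Proof.
move=> HS Sx /connectP [p Hp ->]; elim: p x Sx Hp => //= b p IH x Sx /andP [rxb Hp].
exact: IH (HS _ _ Sx rxb) Hp.
Qed.

Lemma connect_N x y : cE x != None -> connect r x y -> x = y.
Proof.
move=> hx /connectP [[|b p] //= /andP [/andP [h _] _]].
by rewrite (negbTE hx) in h.
Qed.

Lemma connect_step x y : connect r x y -> x != y -> exists2 z, r x z & connect r z y.
Proof.
move=> /connectP [[|b p] /= Hp ->]; first by rewrite eqxx.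
case/andP: Hp => h1 h2 _; exists b => //; apply/connectP; by exists p.
Qed.

Lemma reach_cV e m : connect r e m -> cV (org m) = cV (org e).
Proof.
move=> h; apply/eqP; apply: (connect_inv (S := fun f => cV (org f) == cV (org e))) h => //.
move=> a b /eqP ha /andP [/eqP hn /andP [/eqP hab _]].
by rewrite -hab -ha; have [-> _] := cE_none hn.
Qed.

Definition Sup c f := if cE f is Some _ then anc c (org f) else upE f && anc c (ter f).

Lemma reach_up f m : upE f -> connect r f m -> cE m != None -> anc (ter f) (org m).
Proof.
move=> hf hc hm.
have : Sup (ter f) m.
  apply: (connect_inv (S := Sup (ter f))) hc; last first.
    by have [h1 _ _ _] := upE_spec hf; rewrite /Sup h1 hf anc_refl.
  move=> a b; rewrite /Sup /r /AG; case: (cE a) => [?|] //= /andP [hua hca] /andP [/eqP hab hb].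
  case hcb: (cE b) => [e0|]; first by rewrite -hab.
  case/orP: (classify hcb) => hb'.
  - move: hb' hua; rewrite /downE /upE -hab => /eqP -> /eqP [] hh.
    by rewrite hh eqxx in hb.
  - rewrite hb' /=; have [_ hd hp _] := upE_spec hb'.
    by apply: anc_parent_r => //; rewrite -hp -hab.
by rewrite /Sup; case: (cE m) hm.
Qed.

Definition Sdn x f := if cE f is Some _ then ~~ anc x (org f)
  else (downE f && anc (org f) x) || [&& upE f, ~~ anc x (ter f) & ~~ anc (ter f) x].

Lemma Sdn_closed x a b : Sdn x a -> r a b -> Sdn x b.
Proof.
rewrite /Sdn /r /AG; case hca: (cE a) => [?|] //= Ha /andP [/eqP hab hb].
case/orP: Ha => [/andP [hd hy] | /and3P [hu hny1 hny2]].
- have [_ hdy hpar hdp] := downE_spec hd.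
  case hcb: (cE b) => [e0|].
  + apply/negP => hx; have := anc_depth hx; have := anc_depth hy.
    rewrite -hab hdp; lia.
  + case/orP: (classify hcb) => hb'.
    * rewrite hb' /=; rewrite -hab hpar; by rewrite anc_up.
    * have [_ hdb hpb hdpb] := upE_spec hb'.
      have hdb' : depth (ter b) = depth (org a).
        have : depth (org b) = depth (ter a) by rewrite hab.
        rewrite hdpb hdp; lia.
      have hneq : ter b != org a.
        apply/eqP => hh; move: hb' hd; rewrite /upE /downE hh => /eqP -> /eqP [] hh2.
        by rewrite -hh2 revK eqxx in hb.
      have hnd : downE b = false by apply/negP => /down_up_excl/(_ hb').
      rewrite hnd hb' /=; apply/andP; split; apply/negP => hh.
      * have hle := anc_depth hh; have hle2 := anc_depth hy.
        have hd2 : depth x = depth (ter b) by lia.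
        have e1 := anc_eqd hh hd2.
        have e2 := anc_eqd hy (esym (etrans hd2 hdb')).
        by rewrite -e1 e2 eqxx in hneq.
      * by rewrite (anc_chain hh hy hdb') eqxx in hneq.
- case hcb: (cE b) => [e0|]; first by rewrite -hab.
  case/orP: (classify hcb) => hb'.
  + move: hb' hu; rewrite /downE /upE -hab => /eqP -> /eqP [] hh.
    by rewrite hh eqxx in hb.
  + have [_ hdb hpb _] := upE_spec hb'.
    have hnd : downE b = false by apply/negP => /down_up_excl/(_ hb').
    rewrite hnd hb' /=; apply/andP; split; apply/negP => hh.
    * case: (anc_inv hh) => [hx|[_ hh2]].
      - move: hny2; rewrite hab hpb -hx anc_par //; by rewrite hx.
      - by move: hny1; rewrite hab hpb hh2.
    * by move: hny2; rewrite hab hpb (anc_up hh hdb).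
Qed.

Lemma reach_down f m : downE f -> connect r f m -> cE m != None -> ~~ anc (org f) (org m).
Proof.
move=> hf hc hm.
have : Sdn (org f) m.
  apply: (connect_inv (S := Sdn (org f))) hc; first exact: Sdn_closed.
  by have [h1 _ _ _] := downE_spec hf; rewrite /Sdn h1 hf anc_refl.
by rewrite /Sdn; case: (cE m) hm.
Qed.

Lemma reach_uniq_N e1 e2 m : org e1 = org e2 -> cE e1 != None -> cE m != None ->
  connect r e1 m -> connect r e2 m -> e1 = e2.
Proof.
move=> ho h1 hm c1 c2; have e1m := connect_N h1 c1; subst m.
case h2: (cE e2) => [e0|]; first by apply/esym/(connect_N _ c2); rewrite h2.
case/orP: (classify h2) => hb.
- by have := reach_down hb c2 hm; rewrite ho anc_refl.
- have := reach_up hb c2 hm; have [_ hd hp _] := upE_spec hb.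
  rewrite ho hp => /anc_depth; rewrite depth_parent; lia.
Qed.

Lemma reach_uniq e1 e2 m : org e1 = org e2 -> cE m != None ->
  connect r e1 m -> connect r e2 m -> e1 = e2.
Proof.
move=> ho hm c1 c2.
case h1: (cE e1) => [e0|]; first by apply: (reach_uniq_N ho _ hm c1 c2); rewrite h1.
case h2: (cE e2) => [e0|]; first by apply/esym/(reach_uniq_N (esym ho) _ hm c2 c1); rewrite h2.
have dn_up a b : org a = org b -> downE a -> upE b -> connect r a m -> connect r b m -> False.
  move=> hab ha hb ca cb; have := reach_down ha ca hm; have := reach_up hb cb hm.
  have [_ hd hp _] := upE_spec hb; move=> /anc_up /(_ hd); by rewrite -hp -hab => ->.
case/orP: (classify h1) => hb1; case/orP: (classify h2) => hb2.
- by move: hb1 hb2; rewrite /downE ho => /eqP -> /eqP [].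
- by case: (dn_up _ _ ho hb1 hb2 c1 c2).
- by case: (dn_up _ _ (esym ho) hb2 hb1 c2 c1).
- have a1 := reach_up hb1 c1 hm; have a2 := reach_up hb2 c2 hm.
  have [_ d1 p1 dp1] := upE_spec hb1; have [_ d2 p2 dp2] := upE_spec hb2.
  have hd : depth (ter e1) = depth (ter e2).
    have : depth (org e1) = depth (org e2) by rewrite ho.
    rewrite dp1 dp2; lia.
  have ht := anc_chain a1 a2 hd.
  by move: hb1 hb2; rewrite /upE ht => /eqP -> /eqP [] /rev_inj.
Qed.

Lemma up_reach n : forall f g, upE f -> upE g ->
  depth (ter g) = depth (ter f) + n -> anc (ter f) (ter g) -> connect r f g.
Proof.
elim: n => [|n IH] f g hf hg hd ha.
  have ht := anc_eqd ha (esym (etrans hd (addn0 _))).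
  by move: hf hg; rewrite /upE ht => /eqP -> /eqP [] /rev_inj ->.
case: (anc_inv ha) => [ht|[hdg ha']]; first by move: hd; rewrite ht; lia.
have [_ hdf _ _] := upE_spec hf.
have hdp : 0 < depth (parent (ter g)) by rewrite depth_parent; lia.
have [e' he'] := pe_ex hdp; have [_ hce' ho' ht' _] := pe_spec he'.
have hg' := up_rev he'.
apply: connect_trans (IH f (rev e') hf hg' _ _) _.
- by rewrite ter_rev ho' depth_parent hd; lia.
- by rewrite ter_rev ho'.
apply: connect1; rewrite /r /AG.
have [_ ->] := cE_none hce'; rewrite eqxx /=.
have [_ _ hpg _] := upE_spec hg.
rewrite ter_rev ho' hpg eqxx /= revK; apply/eqP => hh.
by apply: (down_up_excl (e := g)); rewrite // hh (down_pe he').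
Qed.

Lemma up_reach_N f m : upE f -> cE m != None -> anc (ter f) (org m) -> connect r f m.
Proof.
move=> hf hm ha; have [_ hdf _ _] := upE_spec hf.
have hdm : 0 < depth (org m) by have := anc_depth ha; lia.
have [e' he'] := pe_ex hdm; have [_ hce' ho' _ _] := pe_spec he'.
have hg := up_rev he'.
apply: connect_trans (up_reach (n := depth (org m) - depth (ter f)) hf hg _ _) _.
- by rewrite ter_rev ho'; have := anc_depth ha; lia.
- by rewrite ter_rev ho'.
apply: connect1; rewrite /r /AG.
have [_ ->] := cE_none hce'; rewrite eqxx /= ter_rev ho' eqxx /= revK.
by apply/eqP => hh; move: hm; rewrite hh hce'.
Qed.

Lemma down_reach n : forall x e m, depth x = n -> pe x = Some e -> cE m != None ->
  cV (org m) = cV x -> ~~ anc x (org m) -> connect r e m.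
Proof.
elim/ltn_ind: n => n IH x e m hn he hm hcv hna.
have [hdx hce hoe hte hde] := pe_spec he.
have hre : r e m = (ter e == org m).
  rewrite /r /AG hce eqxx /=; case: (ter e == org m) => //=.
  by apply/eqP => hh; move: hm; rewrite hh; have [_ ->] := cE_none hce.
case: (boolP (anc (parent x) (org m))) => hpa.
- case: (eqVneq (parent x) (org m)) => hpm.
    by apply: connect1; rewrite hre hte hpm.
  have [c [hpc hac hdc]] := anc_child hpa hpm.
  have hdc0 : 0 < depth c by rewrite hdc.
  have hcx : c != x.
    by apply/eqP => hh; rewrite -hh hac in hna.
  have [ec hec] := pe_ex hdc0; have [_ hcec hoec htec _] := pe_spec hec.
  apply: connect_trans (connect1 (_ : r e (rev ec))) (up_reach_N (up_rev hec) hm _).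
  + rewrite /r /AG hce eqxx /= org_rev htec hpc hte eqxx /=.
    apply/negP => /eqP /rev_inj hh; move: hcx; by rewrite -hoec -hoe hh eqxx.
  + by rewrite ter_rev hoec.
- have hdp : 0 < depth (parent x).
    rewrite lt0n; apply/negP => /eqP /depth0 hr; move: hpa; rewrite hr.
    rewrite (root_eq (y := org m)) ?anc_root //; by rewrite cV_parent hcv.
  have [e' he'] := pe_ex hdp; have [_ hce' ho' _ _] := pe_spec he'.
  apply: connect_trans (connect1 (_ : r e e')) (IH _ _ (parent x) e' m erefl he' hm _ hpa).
  + rewrite /r /AG hce eqxx /= hte ho' eqxx /=; apply/eqP => hh.
    apply: (down_up_excl (e := e')); first exact: down_pe he'.
    by rewrite hh (up_rev he).
  + by rewrite -hn depth_parent; lia.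
  + by rewrite cV_parent.
Qed.

Lemma count_lemma n0 e0 e0' m : cE n0 = Some e0 -> cE m = Some e0' ->
  [exists e', AG n0 e' && connect r e' m] = AG e0 e0'.
Proof.
move=> hn hm; have [hon htn hrn] := cE_some hn; have [hom htm hrm] := cE_some hm.
have hmN : cE m != None by rewrite hm.
apply/idP/idP.
- move=> /existsP [e' /andP [/andP [/eqP h1 h2] hc]].
  have hcv := reach_cV hc; rewrite -h1 htn hom in hcv.
  rewrite /AG hcv eqxx /=; apply/eqP => hrev.
  have hmr : m = rev n0 by apply: (lift_uniq hm); rewrite hrn hrev.
  have := reach_uniq (e1 := e') (e2 := rev n0) (m := m).
  rewrite org_rev h1 hmN -hmr connect0 => /(_ erefl isT hc isT) hh.
  by move: h2; rewrite hh hmr eqxx.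
- move=> /andP [/eqP ht hne]; apply/existsP.
  have hcv : cV (org m) = cV (ter n0) by rewrite hom htn ht.
  case: (eqVneq (ter n0) (org m)) => hw.
    exists m; rewrite /AG hw eqxx connect0 andbT /=; apply/eqP => hh.
    by move: hm; rewrite hh hrn => [[]] hh2; rewrite hh2 eqxx in hne.
  case: (boolP (anc (ter n0) (org m))) => ha.
    have [c [hpc hac hdc]] := anc_child ha hw.
    have hdc0 : 0 < depth c by rewrite hdc.
    have [ec hec] := pe_ex hdc0; have [_ hcec hoec htec _] := pe_spec hec.
    exists (rev ec); rewrite /AG org_rev htec hpc eqxx /=.
    apply/andP; split.
      by apply/eqP => /rev_inj hh; move: hcec; rewrite hh hn.
    apply: up_reach_N (up_rev hec) hmN _; by rewrite ter_rev hoec.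
  have hdp : 0 < depth (ter n0).
    rewrite lt0n; apply/negP => /eqP /depth0 hr; move: ha; rewrite hr.
    by rewrite (root_eq (y := org m)) ?anc_root.
  have [e' he'] := pe_ex hdp; have [_ hce' ho' _ _] := pe_spec he'.
  exists e'; rewrite /AG ho' eqxx /=; apply/andP; split.
    by apply/eqP => hh; move: hce'; rewrite hh hrn.
  by apply: (down_reach erefl he' hmN _ ha); rewrite hcv.
Qed.

Definition Mx := (\max_(x : gV G) depth x).+1.
Definition phi e := if cE e is Some _ then 0
  else if downE e then 2 * Mx + depth (org e) else 2 * Mx - depth (ter e).

Lemma depth_lt x : depth x < Mx.
Proof. by rewrite ltnS; apply: (leq_bigmax (F := depth) x). Qed.

Lemma phi_dec e e' : r e e' -> phi e' < phi e.
Proof.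
rewrite /r /AG => /andP [/eqP hce /andP [/eqP ht hne]].
have h1 := depth_lt (org e); have h2 := depth_lt (ter e).
have h3 := depth_lt (org e'); have h4 := depth_lt (ter e').
rewrite /phi hce.
case/orP: (classify hce) => he.
- have [_ hd _ hdd] := downE_spec he; rewrite he.
  case hce': (cE e') => [?|]; first by lia.
  case/orP: (classify hce') => he'.
  + have [_ _ _ hdd'] := downE_spec he'; rewrite he'; rewrite ht in hdd; lia.
  + have hnd : downE e' = false by apply/negP => /down_up_excl/(_ he').
    rewrite hnd; lia.
- have hnd : downE e = false by apply/negP => /down_up_excl/(_ he).
  rewrite hnd; have [_ hd _ hdd] := upE_spec he.
  case hce': (cE e') => [?|]; first by lia.
  case/orP: (classify hce') => he'.
  + move: he he'; rewrite /upE /downE -ht => /eqP -> /eqP [] hh.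
    by rewrite hh eqxx in hne.
  + have hnd' : downE e' = false by apply/negP => /down_up_excl/(_ he').
    have [_ hd' _ hdd'] := upE_spec he'; rewrite hnd'; rewrite -ht in hdd'; lia.
Qed.

Import GRing.Theory.
Local Open Scope ring_scope.
Variable R : realType.

Definition Bm : 'M[R]_#|gE G| := \matrix_(i, j)
  ((cE (enum_val i) == None) && AG (enum_val i) (enum_val j))%:R.
Definition Pm : 'M[R]_(#|gE G|, #|gE G0|) := \matrix_(i, k)
  ((cE (enum_val i) == Some (enum_val k)))%:R.
Definition Qm (l : gE G0 -> R) : 'M[R]_(#|gE G0|, #|gE G|) := \matrix_(k, j)
  (\sum_(i : 'I_#|gE G|) (cE (enum_val i) == Some (enum_val k))%:R * (AG (enum_val i) (enum_val j))%:R
     * expR (- l (enum_val k))).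
Definition Ym : 'M[R]_(#|gE G|, #|gE G0|) := \matrix_(j, k)
  ([exists m, (cE m == Some (enum_val k)) && connect r (enum_val j) m])%:R.

Lemma detB : \det (1%:M - Bm) = 1.
Proof.
apply: (det_pot (phi := fun i => phi (enum_val i))) => i j; rewrite mxE.
case hb: (_ && _); first by move=> _; apply: phi_dec; exact: hb.
by rewrite eqxx.
Qed.

Lemma Qval l k j n0 : cE n0 = Some (enum_val k) ->
  Qm l k j = (AG n0 (enum_val j))%:R * expR (- l (enum_val k)).
Proof.
move=> hn; rewrite mxE (bigD1 (enum_rank n0)) //= enum_rankK hn eqxx mul1r.
rewrite big1 ?addr0 // => i hi.
case h: (cE (enum_val i) == Some (enum_val k)); last by rewrite !mul0r.
move/eqP: h => /(lift_uniq hn) h.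
by move: hi; rewrite h enum_valK eqxx.
Qed.

Lemma Yval j k m : cE m = Some (enum_val k) ->
  Ym j k = (connect r (enum_val j) m)%:R.
Proof.
move=> hm; rewrite mxE; congr (nat_of_bool _)%:R; apply/existsP/idP => [[m' /andP [/eqP h1 h2]]|h].
  by rewrite (lift_uniq hm h1).
by exists m; rewrite hm eqxx.
Qed.

Lemma Yval' e (k : 'I_#|gE G0|) m : cE m = Some (enum_val k) ->
  [exists m', (cE m' == Some (enum_val k)) && connect r e m'] = connect r e m.
Proof.
move=> hm; apply/existsP/idP => [[m' /andP [/eqP h1 h2]]|h].
  by rewrite (lift_uniq hm h1).
by exists m; rewrite hm eqxx.
Qed.

Lemma AGf_split l : AGf (pullback cE l) = Bm + Pm *m Qm l.
Proof.
apply/matrixP => i j; rewrite !mxE /pullback.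
case hc: (cE (enum_val i)) => [e0|].
  rewrite /= add0r (bigD1 (enum_rank e0)) //= [Pm _ _]mxE enum_rankK hc eqxx mul1r.
  rewrite big1 ?addr0; first by rewrite (@Qval l (enum_rank e0) j (enum_val i)) // enum_rankK.
  move=> k hk; rewrite mxE hc; case h: (Some e0 == Some (enum_val k)); last by rewrite mul0r.
  by move: hk; move/eqP: h => [->]; rewrite enum_valK eqxx.
rewrite /= big1 ?addr0; first by rewrite oppr0 expR0 mulr1.
by move=> k _; rewrite mxE hc mul0r.
Qed.

Lemma BY : (1%:M - Bm) *m Ym = Pm.
Proof.
apply/matrixP => j k; rewrite mulmxBl mul1mx !mxE.
have [m hm] := lift_ex (enum_val k).
have hmN : cE m != None by rewrite hm.
rewrite (Yval' _ hm).
case hc: (cE (enum_val j)) => [e1|].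
  rewrite big1; last by move=> l _; rewrite !mxE hc /= mul0r.
  rewrite subr0; congr (nat_of_bool _)%:R; apply/idP/idP.
    have hN : cE (enum_val j) != None by rewrite hc.
    by move=> /(connect_N hN) h; rewrite -hc h hm.
  move=> /eqP h; have hj : cE (enum_val j) = Some (enum_val k) by rewrite hc h.
  by rewrite (lift_uniq hm hj) connect0.
rewrite /= (eq_bigr (fun l => (AG (enum_val j) (enum_val l) &&
   connect r (enum_val l) m)%:R)); last first.
  by move=> l _; rewrite !mxE hc eqxx /= (Yval' _ hm) -natrM mulnb.
rewrite sum_bool1; last first.
  move=> l1 l2 /andP [/andP [/eqP h1 _] c1] /andP [/andP [/eqP h2 _] c2].
  apply: enum_val_inj; apply: (reach_uniq _ hmN c1 c2); by rewrite -h1 -h2.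
have -> : connect r (enum_val j) m = [exists l : 'I_#|gE G|, AG (enum_val j) (enum_val l) && connect r (enum_val l) m].
  apply/idP/existsP.
  - move=> h; have hne : enum_val j != m by apply/eqP => hh; move: hmN; rewrite -hh hc.
    have [z hz hzc] := connect_step h hne; exists (enum_rank z); rewrite enum_rankK hzc andbT.
    by move: hz; rewrite /r hc.
  - move=> [l /andP [h1 h2]]; apply: connect_trans h2; apply: connect1.
    by rewrite /r hc eqxx.
by rewrite subrr.
Qed.

Lemma QY l : Qm l *m Ym = AGf l.
Proof.
apply/matrixP => k k'; rewrite !mxE.
have [n0 hn] := lift_ex (enum_val k); have [m hm] := lift_ex (enum_val k').
rewrite (eq_bigr (fun j => expR (- l (enum_val k)) *
   (AG n0 (enum_val j) && connect r (enum_val j) m)%:R)); last first.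
  by move=> j _; rewrite (Qval _ _ hn) (Yval _ hm) -mulnb natrM [_ * expR _]mulrC -mulrA.
rewrite -mulr_sumr sum_bool1; last first.
  move=> l1 l2 /andP [/andP [/eqP h1 _] c1] /andP [/andP [/eqP h2 _] c2].
  apply: enum_val_inj; apply: (reach_uniq _ _ c1 c2); by rewrite ?hm // -h1 -h2.
rewrite mulrC; congr ((nat_of_bool _)%:R * _); rewrite -(count_lemma hn hm).
apply/existsP/existsP => [[j hj]|[e he]]; first by exists (enum_val j).
by exists (enum_rank e); rewrite enum_rankK.
Qed.

Lemma main_eq (l : gE G0 -> R) : FG (pullback cE l) = FG l.
Proof.
rewrite /FG AGf_split.
have -> : 1%:M - (Bm + Pm *m Qm l) = (1%:M - Bm) *m (1%:M - Ym *m Qm l).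
  by rewrite mulmxBr mulmx1 mulmxA BY opprD addrA.
by rewrite det_mulmx detB mul1r sylv QY.
Qed.
End Comb.

Local Open Scope ring_scope.

Theorem mainTheorem9 (R : realType) (G G0 : graph)
    (cV : gV G -> gV G0) (cE : gE G -> option (gE G0)) :
  connected_graph G -> connected_graph G0 ->
  is_collapse cV cE ->
  forall l : gE G0 -> R, length_fun l ->
    FG (pullback cE l) = FG l.
Proof.
move=> _ _ Hc l _; exact: (main_eq Hc l).
Qed.
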